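(* Let $n\ge 1$, $c>0$, $m$, $\hbar\neq 0$ be constants and let $\omega^0,\omega^1\in(-\pi/2,\pi/2]$. Let $a_\ast$ be a nowhere vanishing, differentiable complex-valued function of $t\in\mathbb{R}$ such that $\theta:=\arg a_\ast(t)$ is a constant independent of $t$. Put $C_0:=2me^{i\omega^0}/\hbar$. Let $V_0$ and $V_0'$ be functions on $\mathbb{C}$ such that $$\partial_t V_0(\psi)=\mathrm{Re}\,\big(\partial_t\overline{\psi}\,V_0'(\psi)\big)$$ for every function $\psi=\psi(t,x)$. Assume $C_0\in\mathbb{R}$ and $e^{2i(\theta+\omega^1)}/e^{2i\omega^0}\in\mathbb{R}$. Let $\phi_\ast=\phi_\ast(t,x)$, $(t,x)\in\mathbb{R}\times\mathbb{R}^n$, be a complex-valued solution of $$-\frac{1}{c^2}\frac{e^{2i(\theta+\omega^1)}}{e^{2i\omega^0}}\left(\partial_t^2+\frac{n\,\partial_t a_\ast}{a_\ast}\partial_t+\Big(\frac{mc^2e^{i\omega^0}}{\hbar}\Big)^2\right)\phi_\ast+\frac{1}{|a_\ast|^2}\Delta_x\phi_\ast-V_0'(\phi_\ast)=0,$$ where $\Delta_x=\sum_{j=1}^n\partial^2/(\partial x^j)^2$, which is sufficiently smooth and decays at spatial infinity so that all integrals below are finite and integrals over $\mathbb{R}^n$ of spatial divergences vanish. Then for every $t$, $$\int_{\mathbb{R}^n}e^0(t,x)\,dx+\int_0^t\int_{\mathbb{R}^n}e^{n+1}(s,x)\,dx\,ds=\int_{\mathbb{R}^n}e^0(0,x)\,dx,$$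 where $$e^0:=\frac{e^{2i(\theta+\omega^1)}}{c^2e^{2i\omega^0}}\left(|\partial_t\phi_\ast|^2+\frac{C_0^2c^4}{4}|\phi_\ast|^2\right)+\frac{1}{|a_\ast|^2}\sum_{j=1}^n|\partial_{x^j}\phi_\ast|^2+2V_0(\phi_\ast)$$ and $$e^{n+1}:=\frac{e^{2i(\theta+\omega^1)}}{c^2e^{2i\omega^0}}\,2\,\mathrm{Re}\Big(\frac{n\,\partial_t a_\ast}{a_\ast}\Big)|\partial_t\phi_\ast|^2-\partial_t\Big(\frac{1}{|a_\ast|^2}\Big)\sum_{j=1}^n|\partial_{x^j}\phi_\ast|^2.$$
   Context: Here $a_\ast$ plays the role of a (complex) scale-function of space; $t$ is a real time variable and $x=(x^1,\dots,x^n)\in\mathbb{R}^n$. *)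

(* Defs.v *)
From HB Require Import structures.
From mathcomp Require Import all_boot all_order all_algebra.
From mathcomp Require Import all_classical all_reals all_analysis.
From mathcomp Require Import complex.

Set Implicit Arguments.
Unset Strict Implicit.
Unset Printing Implicit Defensive.

Import Order.TTheory GRing.Theory Num.Theory.
Import numFieldNormedType.Exports.
Local Open Scope classical_set_scope.
Local Open Scope ring_scope.
Local Open Scope complex_scope.

Section Defs.
Variable R : realType.

Definition creal (z : R[i]) : R := complex.Re z.
Definition cimag (z : R[i]) : R := complex.Im z.

Definition expi (w : R) : R[i] := cos w +i* sin w.

Definition abs2 (z : R[i]) : R := (creal z) ^+ 2 + (cimag z) ^+ 2.

Definition cderivable (f : R -> R[i]) (t : R) : Prop :=
  derivable (fun s => creal (f s)) t 1 /\ derivable (fun s => cimag (f s)) t 1.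

Definition cderive (f : R -> R[i]) (t : R) : R[i] :=
  derive1 (fun s => creal (f s)) t +i* derive1 (fun s => cimag (f s)) t.

Definition evec (n : nat) (j : 'I_n) : 'rV[R]_n := delta_mx 0 j.

Definition dt (n : nat) (f : R -> 'rV[R]_n -> R[i]) (t : R) (x : 'rV[R]_n)
  : R[i] := cderive (fun s => f s x) t.

Definition dx (n : nat) (j : 'I_n) (f : R -> 'rV[R]_n -> R[i]) (t : R)
  (x : 'rV[R]_n) : R[i] := cderive (fun h => f t (x + h *: evec j)) 0.

Definition dxR (n : nat) (j : 'I_n) (g : 'rV[R]_n -> R) (x : 'rV[R]_n) : R :=
  derive1 (fun h => g (x + h *: evec j)) 0.

(* Integral over R^n (Lebesgue measure), realised as the iterated
   Lebesgue integral over the successive coordinates, together with the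
   corresponding integrability predicate. *)
Fixpoint iint (n : nat) : ('rV[R]_n -> R) -> R :=
  match n with
  | 0 => fun f => f 0
  | k.+1 => fun f =>
      Rintegral (@lebesgue_measure R) setT
        (fun y : R => iint (fun x : 'rV[R]_k => f (row_mx y%:M x)))
  end.

Fixpoint iintegrable (n : nat) : ('rV[R]_n -> R) -> Prop :=
  match n with
  | 0 => fun _ => True
  | k.+1 => fun f =>
      (@lebesgue_measure R).-integrable setT
        (fun y : R => (iint (fun x : 'rV[R]_k => f (row_mx y%:M x)))%:E)
      /\ forall y : R, iintegrable (fun x : 'rV[R]_k => f (row_mx y%:M x))
  end.

Definition cint (n : nat) (f : 'rV[R]_n -> R[i]) : R[i] :=
  iint (fun x => creal (f x)) +i* iint (fun x => cimag (f x)).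

Definition cintegrable (n : nat) (f : 'rV[R]_n -> R[i]) : Prop :=
  iintegrable (fun x => creal (f x)) /\ iintegrable (fun x => cimag (f x)).

Definition tint (a b : R) (f : R -> R) : R :=
  if a <= b then Rintegral (@lebesgue_measure R) `[a, b] f
  else - Rintegral (@lebesgue_measure R) `[b, a] f.

Definition ctint (a b : R) (f : R -> R[i]) : R[i] :=
  tint a b (fun s => creal (f s)) +i* tint a b (fun s => cimag (f s)).

Definition Kcoef (theta w0 w1 : R) : R[i] :=
  expi (2 * (theta + w1)) / expi (2 * w0).

Definition C0coef (m hbar w0 : R) : R[i] := (2 * m)%:C * expi w0 / hbar%:C.

Definition e0 (n : nat) (c m hbar theta w0 w1 : R) (a : R -> R[i])
  (V0 : R[i] -> R) (phi : R -> 'rV[R]_n -> R[i]) (t : R) (x : 'rV[R]_n)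
  : R[i] :=
  Kcoef theta w0 w1 / (c ^+ 2)%:C *
    ((abs2 (dt phi t x))%:C
     + (C0coef m hbar w0 ^+ 2 * (c ^+ 4)%:C / 4) * (abs2 (phi t x))%:C)
  + (1 / abs2 (a t))%:C * (\sum_(j < n) abs2 (dx j phi t x))%:C
  + (2 * V0 (phi t x))%:C.

Definition en1 (n : nat) (c theta w0 w1 : R) (a : R -> R[i])
  (phi : R -> 'rV[R]_n -> R[i]) (t : R) (x : 'rV[R]_n) : R[i] :=
  Kcoef theta w0 w1 / (c ^+ 2)%:C * 2
    * (creal (n%:R * cderive a t / a t))%:C * (abs2 (dt phi t x))%:C
  - (derive1 (fun s => 1 / abs2 (a s)) t)%:C
    * (\sum_(j < n) abs2 (dx j phi t x))%:C.

Definition flux (n : nat) (j : 'I_n) (phi : R -> 'rV[R]_n -> R[i]) (t : R)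
  (x : 'rV[R]_n) : R := creal (conjc (dt phi t x) * dx j phi t x).

Definition divflux (n : nat) (phi : R -> 'rV[R]_n -> R[i]) (t : R)
  (x : 'rV[R]_n) : R := \sum_(j < n) dxR j (flux j phi t) x.

End Defs.

Arguments evec {R n} j.

(* Main.v *)
Require Import Defs.
From HB Require Import structures.
From mathcomp Require Import all_boot all_order all_algebra.
From mathcomp Require Import all_classical all_reals all_analysis.
From mathcomp Require Import complex.
From mathcomp Require Import ring lra.

Import Order.TTheory GRing.Theory Num.Theory.
Import numFieldNormedType.Exports.
Local Open Scope classical_set_scope.
Local Open Scope ring_scope.
Local Open Scope complex_scope.

Section S.
Variable R : realType.

Lemma cder_re (f : R -> R[i]) t : cderivable f t ->
  is_derive t (1:R) (fun s => creal (f s)) (creal (cderive f t)).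
Proof. by case=> H1 H2; apply: DeriveDef H1 _; rewrite /= derive1E. Qed.

Lemma cder_im (f : R -> R[i]) t : cderivable f t ->
  is_derive t (1:R) (fun s => cimag (f s)) (cimag (cderive f t)).
Proof. by case=> H1 H2; apply: DeriveDef H2 _; rewrite /= derive1E. Qed.

Lemma ReCM (z w : R[i]) : creal (conjc z * w) = creal z * creal w + cimag z * cimag w.
Proof. by case: z => a b; case: w => c d; rewrite /creal /cimag /=; ring. Qed.

Lemma ReD (z w : R[i]) : creal (z + w) = creal z + creal w.
Proof. by case: z => a b; case: w. Qed.
Lemma ImD (z w : R[i]) : cimag (z + w) = cimag z + cimag w.
Proof. by case: z => a b; case: w. Qed.

Lemma isdD (f g : R -> R) t df dg : is_derive t (1:R) f df -> is_derive t (1:R) g dg ->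
  is_derive t (1:R) (fun s => f s + g s) (df + dg).
Proof. move=> H1 H2; exact: is_deriveD. Qed.

Lemma isdM (f g : R -> R) t df dg : is_derive t (1:R) f df -> is_derive t (1:R) g dg ->
  is_derive t (1:R) (fun s => f s * g s) (f t * dg + g t * df).
Proof. move=> H1 H2; exact: is_deriveM. Qed.

Lemma isdC (k : R) t : is_derive t (1:R) (fun _ : R => k) 0.
Proof. exact: is_derive_cst. Qed.


Arguments cder_re {f t}.
Arguments cder_im {f t}.
Arguments isdD {f g t df dg}.
Arguments isdM {f g t df dg}.

Lemma abs2_der (f : R -> R[i]) t : cderivable f t ->
  is_derive t (1:R) (fun s => abs2 (f s)) (2 * creal (conjc (f t) * cderive f t)).
Proof.
move=> H; have H1 := cder_re H; have H2 := cder_im H.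
have := isdD (isdM H1 H1) (isdM H2 H2).
rewrite ReCM /abs2 /creal /cimag => K.
by apply: (is_derive_eq K); ring.
Qed.

Lemma ReCM_der (f g : R -> R[i]) t : cderivable f t -> cderivable g t ->
  is_derive t (1:R) (fun s => creal (conjc (f s) * g s))
    (creal (conjc (cderive f t) * g t + conjc (f t) * cderive g t)).
Proof.
move=> Hf Hg.
have := isdD (isdM (cder_re Hf) (cder_re Hg)) (isdM (cder_im Hf) (cder_im Hg)).
have E : (fun s => creal (conjc (f s) * g s)) = (fun s => creal (f s) * creal (g s) + cimag (f s) * cimag (g s)).
  by apply: funext => s; rewrite ReCM.
rewrite E ReD !ReCM => K.
by apply: (is_derive_eq K); rewrite /creal /cimag; ring.
Qed.


Lemma der1_val (f : R -> R) t df : is_derive t (1:R) f df -> derive1 f t = df.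
Proof. by move=> H; rewrite derive1E derive_val. Qed.

Lemma isd_sum n (h : 'I_n -> R -> R) t (dh : 'I_n -> R) :
  (forall i, is_derive t (1:R) (h i) (dh i)) ->
  is_derive t (1:R) (fun s => \sum_(i < n) h i s) (\sum_(i < n) dh i).
Proof. by move=> H; have := is_derive_sum H; rewrite fct_sumE. Qed.

Lemma realC (z : R[i]) : cimag z = 0 -> z = (creal z)%:C.
Proof. by case: z => a b /= ->. Qed.

Lemma ReCMC (z w : R[i]) : creal (conjc z * w) = creal (conjc w * z).
Proof. by rewrite !ReCM; ring. Qed.

Lemma ReV (z u w p s : R[i]) (k C b : R) :
  creal (conjc z * ((-k)%:C * (u + w * z + C%:C * p) + b%:C * s)) =
  - k * (creal (conjc z * u) + creal w * abs2 z + C * creal (conjc z * p))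
  + b * creal (conjc z * s).
Proof.
case: z => z1 z2; case: u => u1 u2; case: w => w1 w2; case: p => p1 p2;
case: s => s1 s2; rewrite /creal /cimag /abs2 /=; ring.
Qed.

Lemma ReCM_sum n (z : R[i]) (F : 'I_n -> R[i]) :
  creal (conjc z * \sum_(j < n) F j) = \sum_(j < n) creal (conjc z * F j).
Proof.
rewrite mulr_sumr; elim: n F => [|k IH] F; first by rewrite !big_ord0; case: z => a b; rewrite /creal /=; ring.
by rewrite !big_ord_recr /= ReD IH.
Qed.

Lemma Re_sum n (F : 'I_n -> R[i]) :
  creal (\sum_(j < n) F j) = \sum_(j < n) creal (F j).
Proof.
elim: n F => [|k IH] F; first by rewrite !big_ord0.
by rewrite !big_ord_recr /= ReD IH.
Qed.

Lemma abs2_eq0 (z : R[i]) : z != 0 -> abs2 z != 0.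
Proof.
case: z => a b nz; apply/negP => /eqP H; move: nz; rewrite /abs2 /creal /cimag /= in H.
have a0 : a = 0 by nra.
have b0 : b = 0 by nra.
by rewrite a0 b0 eqxx.
Qed.

Lemma iint_lin (n : nat) (f g : 'rV[R]_n -> R) (a b : R) :
  iintegrable f -> iintegrable g ->
  iintegrable (fun x => a * f x + b * g x) /\
  iint (fun x => a * f x + b * g x) = a * iint f + b * iint g.
Proof.
elim: n f g => [|k IH] f g /=; first by [].
move=> [If Hf] [Ig Hg].
have E : forall y : R, iint (fun x : 'rV[R]_k => a * f (row_mx y%:M x) + b * g (row_mx y%:M x))
  = a * iint (fun x => f (row_mx y%:M x)) + b * iint (fun x => g (row_mx y%:M x)).
  by move=> y; case: (IH _ _ (Hf y) (Hg y)).
have Ia : (@lebesgue_measure R).-integrable setT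
   (EFin \o (fun y => a * iint (fun x : 'rV[R]_k => f (row_mx y%:M x)))).
  exact: (integrableZl measurableT a If).
have Ib : (@lebesgue_measure R).-integrable setT
   (EFin \o (fun y => b * iint (fun x : 'rV[R]_k => g (row_mx y%:M x)))).
  exact: (integrableZl measurableT b Ig).
split; last first.
  rewrite (_ : (fun y : R => iint (fun x : 'rV[R]_k => a * f (row_mx y%:M x) + b * g (row_mx y%:M x))) = (fun y => a * iint (fun x : 'rV[R]_k => f (row_mx y%:M x)) + b * iint (fun x => g (row_mx y%:M x)))); last exact: funext E.
  by rewrite RintegralD // !RintegralZl.
split; last by move=> y; case: (IH _ _ (Hf y) (Hg y)).
have J := integrableD measurableT Ia Ib.
suff -> : (fun y : R => (iint (fun x : 'rV[R]_k => a * f (row_mx y%:M x) + b * g (row_mx y%:M x)))%:E)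
  = ((EFin \o (fun y => a * iint (fun x : 'rV[R]_k => f (row_mx y%:M x)))) \+ 
     (EFin \o (fun y => b * iint (fun x : 'rV[R]_k => g (row_mx y%:M x))))) by [].
by apply: funext => y; rewrite /= E EFinD.
Qed.

Lemma iint0 (n : nat) : iint (fun _ : 'rV[R]_n => 0 : R) = 0 /\ iintegrable (fun _ : 'rV[R]_n => 0 : R).
Proof.
elim: n => [|k [IH1 IH2]] //=; rewrite IH1; split.
  by rewrite Rintegral_cst // mul0r.
split => //. exact: integrable0.
Qed.

Lemma ftc_ab (E F : R -> R) :
  (forall t, derivable E t 1 /\ derive1 E t = - F t) -> continuous F ->
  forall a b, a < b -> Rintegral (@lebesgue_measure R) `[a, b] F = E a - E b.
Proof.
move=> HE cF a b ab.
have cG : continuous (fun s => - E s).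
  move=> x; apply: differentiable_continuous.
  apply/derivable1_diffP; apply: derivableN; exact: (HE x).1.
have := @continuous_FTC2 R F (fun s => - E s) a b ab.
rewrite /Rintegral => ->.
- by rewrite -EFinB /= opprK addrC.
- exact: continuous_subspaceT.
- split.
  + move=> x _; apply: derivableN; exact: (HE x).1.
  + exact: cvg_at_right_filter (cG a).
  + exact: cvg_at_left_filter (cG b).
- move=> x _; rewrite derive1E deriveN; last exact: (HE x).1.
  by rewrite -derive1E (HE x).2 opprK.
Qed.

Lemma ftc_const (E F : R -> R) :
  (forall t, derivable E t 1 /\ derive1 E t = - F t) -> continuous F ->
  forall t, E t + tint 0 t F = E 0.
Proof.
move=> HE cF t; rewrite /tint.
case: (ltgtP 0 t) => [t0|t0|<-].
- by rewrite (@ftc_ab E F HE cF _ _ t0); ring.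
- by rewrite (@ftc_ab E F HE cF _ _ t0); ring.
- by rewrite set_itv1 Rintegral_set1 addr0.
Qed.


End S.

Lemma cext (R : realType) (z w : R[i]) : creal z = creal w -> cimag z = cimag w -> z = w.
Proof. by case: z => ? ?; case: w => ? ? /= -> ->. Qed.

Lemma ReRC (R : realType) (x : R) : creal x%:C = x. Proof. by []. Qed.
Lemma ImRC (R : realType) (x : R) : cimag x%:C = 0. Proof. by []. Qed.

Arguments realC {R z}.
Arguments isdC {R}.
Arguments iint_lin {R n f g}.
Arguments ReCMC {R}.
Arguments ReCM {R}.
Arguments cder_re {R f t}.
Arguments cder_im {R f t}.
Arguments isdD {R f g t df dg}.
Arguments isdM {R f g t df dg}.
Arguments abs2_der {R f t}.
Arguments ReCM_der {R f g t}.
Arguments isd_sum {R n h t dh}.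
Arguments der1_val {R f t df}.
Arguments abs2_eq0 {R z}.

Theorem lemma6p1 (R : realType) (n : nat) (c m hbar w0 w1 theta : R)
  (a : R -> R[i]) (V0 : R[i] -> R) (V0' : R[i] -> R[i])
  (phi : R -> 'rV[R]_n -> R[i]) :
  (0 < n)%N -> 0 < c -> hbar != 0 ->
  - (pi / 2) < w0 <= pi / 2 -> - (pi / 2) < w1 <= pi / 2 ->
  (forall t, a t != 0) ->
  (forall t, cderivable a t) ->
  (forall t, a t = (Num.sqrt (abs2 (a t)))%:C * expi theta) ->
  (forall (psi : R -> R[i]) (t : R), cderivable psi t ->
     derivable (fun s => V0 (psi s)) t 1 /\
     derive1 (fun s => V0 (psi s)) t
       = creal (conjc (cderive psi t) * V0' (psi t))) ->
  cimag (C0coef m hbar w0) = 0 ->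
  cimag (Kcoef theta w0 w1) = 0 ->
  (forall t x,
     cderivable (fun s => phi s x) t /\
     cderivable (fun s => dt phi s x) t /\
     forall j : 'I_n,
       cderivable (fun h => phi t (x + h *: evec j)) 0 /\
       cderivable (fun h => dx j phi t (x + h *: evec j)) 0 /\
       cderivable (fun h => dt phi t (x + h *: evec j)) 0 /\
       cderivable (fun s => dx j phi s x) t /\
       dt (dx j phi) t x = dx j (dt phi) t x) ->
  (forall t x,
     - (1 / (c ^+ 2)%:C) * Kcoef theta w0 w1 *
       (dt (dt phi) t x + n%:R * cderive a t / a t * dt phi t x
        + ((m * c ^+ 2)%:C * expi w0 / hbar%:C) ^+ 2 * phi t x)
     + (1 / abs2 (a t))%:C * (\sum_(j < n) dx j (dx j phi) t x)
     - V0' (phi t x) = 0) ->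
  (forall t, cintegrable (e0 c m hbar theta w0 w1 a V0 phi t)) ->
  (forall t, cintegrable (en1 c theta w0 w1 a phi t)) ->
  (forall t, iintegrable (divflux phi t) /\ iint (divflux phi t) = 0) ->
  (forall t,
     cderivable (fun s => cint (e0 c m hbar theta w0 w1 a V0 phi s)) t /\
     cderive (fun s => cint (e0 c m hbar theta w0 w1 a V0 phi s)) t
       = cint (fun x => cderive (fun s => e0 c m hbar theta w0 w1 a V0 phi s x) t)) ->
  continuous (fun s => creal (cint (en1 c theta w0 w1 a phi s))) ->
  continuous (fun s => cimag (cint (en1 c theta w0 w1 a phi s))) ->
  forall t : R,
    cint (e0 c m hbar theta w0 w1 a V0 phi t)
    + ctint 0 t (fun s => cint (en1 c theta w0 w1 a phi s))
    = cint (e0 c m hbar theta w0 w1 a V0 phi 0).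
Proof.
move=> n0 c0 h0 hw0 hw1 anz ader aarg HV C0i Ki Hphi Heq Ie0 Ien1 Hdiv Hder cFr cFi.
have c2 : c ^+ 2 != 0 by rewrite expf_neq0 // gt_eqF.
have [kr KE] : exists kr : R, Kcoef theta w0 w1 / (c ^+ 2)%:C = kr%:C.
  by exists (creal (Kcoef theta w0 w1) / c ^+ 2); rewrite {1}(realC Ki) fmorph_div.
have KE' : - (1 / (c ^+ 2)%:C) * Kcoef theta w0 w1 = (- kr)%:C.
  have -> : - (1 / (c ^+ 2)%:C) * Kcoef theta w0 w1 = - (Kcoef theta w0 w1 / (c ^+ 2)%:C).
    by ring.
  by rewrite KE rmorphN.
have [Cr [ME C0E]] : exists Cr : R, ((m * c ^+ 2)%:C * expi w0 / hbar%:C) ^+ 2 = Cr%:C /\ C0coef m hbar w0 ^+ 2 * (c ^+ 4)%:C / 4 = Cr%:C.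
  exists (creal (C0coef m hbar w0) ^+ 2 * c ^+ 4 / 4); split.
    have -> : (m * c ^+ 2)%:C * expi w0 / hbar%:C = C0coef m hbar w0 * (c ^+ 2)%:C / 2.
      rewrite /C0coef !rmorphM rmorph_nat; field.
      by rewrite fmorph_eq0.
    rewrite (realC C0i).
    rewrite !(rmorphD, rmorphM, rmorphXn, fmorph_div, rmorph_nat).
    by field; rewrite ?fmorph_eq0.
  rewrite {1}(realC C0i).
  rewrite !(rmorphD, rmorphM, rmorphXn, fmorph_div, rmorph_nat).
  by field; rewrite ?fmorph_eq0.
have e0E : forall s x, e0 c m hbar theta w0 w1 a V0 phi s x =
  (kr * (abs2 (dt phi s x) + Cr * abs2 (phi s x))
   + 1 / abs2 (a s) * (\sum_(j < n) abs2 (dx j phi s x)) + 2 * V0 (phi s x))%:C.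
  move=> s x; rewrite /e0 KE C0E.
  by rewrite !(rmorphD, rmorphM, rmorphXn, fmorph_div, rmorph_nat, rmorph1).
have en1E : forall s x, en1 c theta w0 w1 a phi s x =
  (kr * 2 * creal (n%:R * cderive a s / a s) * abs2 (dt phi s x)
   - derive1 (fun s => 1 / abs2 (a s)) s * (\sum_(j < n) abs2 (dx j phi s x)))%:C.
  move=> s x; rewrite /en1 KE.
  by rewrite !(rmorphB, rmorphD, rmorphM, rmorphXn, fmorph_div, rmorph_nat, rmorph1).
have VE : forall s x, V0' (phi s x) = (- kr)%:C * (dt (dt phi) s x
     + n%:R * cderive a s / a s * dt phi s x + Cr%:C * phi s x)
     + (1 / abs2 (a s))%:C * \sum_(j < n) dx j (dx j phi) s x.
  move=> s x; have := Heq s x; rewrite KE' ME.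
  by move/eqP; rewrite subr_eq0 => /eqP <-.
have key : forall s x,
    derive1 (fun r => creal (e0 c m hbar theta w0 w1 a V0 phi r x)) s
    = - creal (en1 c theta w0 w1 a phi s x) + 2 * (1 / abs2 (a s)) * divflux phi s x.
  move=> s x.
  have [Hp [Hpt Hj]] := Hphi s x.
  have bder : is_derive s (1:R) (fun r => 1 / abs2 (a r))
      (derive1 (fun r => 1 / abs2 (a r)) s).
    have ad := abs2_der (ader s).
    have dv : derivable (fun r => 1 / abs2 (a r)) s 1.
      rewrite (_ : (fun r => 1 / abs2 (a r)) = (fun r => (abs2 (a r))^-1)); last first.
        by apply: funext => r; rewrite div1r.
      have dd : derivable (fun r => abs2 (a r)) s 1 by case: ad.
      exact: (derivableV (f := fun r => abs2 (a r)) (abs2_eq0 (anz s)) dd).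
    by apply: DeriveDef dv _; rewrite derive1E.
  have sumder : is_derive s (1:R) (fun r => \sum_(j < n) abs2 (dx j phi r x))
      (\sum_(j < n) 2 * creal (conjc (dx j phi s x) * dx j (dt phi) s x)).
    apply: isd_sum => j; have [_ [_ [_ [h4 h5]]]] := Hj j.
    rewrite -h5; exact: abs2_der h4.
  have V0d := HV (fun r => phi r x) s Hp.
  have V0der : is_derive s (1:R) (fun r => V0 (phi r x))
      (creal (conjc (dt phi s x) * V0' (phi s x))).
    by apply: DeriveDef V0d.1 _; rewrite -derive1E V0d.2.
  have D := isdD (isdD (isdM (isdC kr s) (isdD (abs2_der Hpt) (isdM (isdC Cr s) (abs2_der Hp))))
       (isdM bder sumder)) (isdM (isdC 2 s) V0der).
  rewrite (_ : (fun r => creal (e0 c m hbar theta w0 w1 a V0 phi r x)) =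
     (fun r => kr * (abs2 (dt phi r x) + Cr * abs2 (phi r x))
   + 1 / abs2 (a r) * (\sum_(j < n) abs2 (dx j phi r x)) + 2 * V0 (phi r x))); last first.
    by apply: funext => r; rewrite e0E.
  rewrite (der1_val D) en1E ReRC.
  have divE : divflux phi s x = \sum_(j < n) creal (conjc (dx j (dt phi) s x) * dx j phi s x)
      + \sum_(j < n) creal (conjc (dt phi s x) * dx j (dx j phi) s x).
    rewrite -big_split; apply: eq_bigr.
    move=> j _; rewrite /dxR /flux; have [h1 [h2 [h3 _]]] := Hj j.
    have Hd := ReCM_der h3 h2.
    etransitivity; first exact: (der1_val Hd).
    cbv beta.
    by rewrite !scale0r !addr0 ReD.
  rewrite divE VE ReV ReCM_sum.
  rewrite -/(dt (dt phi) s x) -/(dt phi s x).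
  rewrite (ReCMC (phi s x)) -mulr_sumr.
  rewrite [X in _ = _ + 2 * _ * (X + _)](eq_bigr (fun j => creal (conjc (dx j phi s x) * dx j (dt phi) s x))); last first.
    by move=> j _; rewrite ReCMC.
  generalize (creal (conjc (dt phi s x) * dt (dt phi) s x)) => A1.
  generalize (creal (conjc (dt phi s x) * phi s x)) => A2.
  generalize (abs2 (phi s x)) => B1.
  generalize (abs2 (dt phi s x)) => B2.
  generalize (1 / abs2 (a s)) => bb.
  generalize (\sum_(i < n) creal (conjc (dx i phi s x) * dx i (dt phi) s x)) => S1.
  generalize (\sum_(j < n) abs2 (dx j phi s x)) => S0.
  generalize (\sum_(j < n) creal (conjc (dt phi s x) * dx j (dx j phi) s x)) => S2.
  generalize (derive1 (fun r : R => 1 / abs2 (a r)) s) => db.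
  generalize (creal (n%:R * cderive a s / a s)) => wr.
  generalize (V0 (phi s x)) => v.
  ring.
have imE : forall s x, cimag (e0 c m hbar theta w0 w1 a V0 phi s x) = 0.
  by move=> s x; rewrite e0E.
have imE1 : forall s x, cimag (en1 c theta w0 w1 a phi s x) = 0.
  by move=> s x; rewrite en1E.
have H1 : forall u, derivable (fun s => creal (cint (e0 c m hbar theta w0 w1 a V0 phi s))) u 1 /\ derive1 (fun s => creal (cint (e0 c m hbar theta w0 w1 a V0 phi s))) u
   = - creal (cint (en1 c theta w0 w1 a phi u)).
  move=> u; split; first exact: (Hder u).1.1.
  have H : derive1 (fun s => creal (cint (e0 c m hbar theta w0 w1 a V0 phi s))) u
     = iint (fun x => derive1 (fun s => creal (e0 c m hbar theta w0 w1 a V0 phi s x)) u)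
     := congr1 (@creal R) (Hder u).2.
  rewrite H (_ : (fun x => derive1 (fun s => creal (e0 c m hbar theta w0 w1 a V0 phi s x)) u)
     = (fun x => (-1) * creal (en1 c theta w0 w1 a phi u x)
                 + (2 * (1 / abs2 (a u))) * divflux phi u x)); last first.
    by apply: funext => x; rewrite key mulN1r mulrA.
  have [_ ->] := iint_lin (-1) (2 * (1 / abs2 (a u))) (Ien1 u).1 (Hdiv u).1.
  by rewrite (Hdiv u).2 mulr0 addr0 mulN1r.
have H2 : forall u, derivable (fun s => cimag (cint (e0 c m hbar theta w0 w1 a V0 phi s))) u 1 /\ derive1 (fun s => cimag (cint (e0 c m hbar theta w0 w1 a V0 phi s))) u
   = - cimag (cint (en1 c theta w0 w1 a phi u)).
  move=> u; split; first exact: (Hder u).1.2.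
  have H : derive1 (fun s => cimag (cint (e0 c m hbar theta w0 w1 a V0 phi s))) u
     = iint (fun x => derive1 (fun s => cimag (e0 c m hbar theta w0 w1 a V0 phi s x)) u)
     := congr1 (@cimag R) (Hder u).2.
  rewrite H (_ : (fun x => derive1 (fun s => cimag (e0 c m hbar theta w0 w1 a V0 phi s x)) u)
     = (fun _ => 0)); last first.
    apply: funext => x.
    rewrite (_ : (fun s => cimag (e0 c m hbar theta w0 w1 a V0 phi s x)) = (fun _ => 0)).
      exact: der1_val (isdC 0 u).
    by apply: funext => s; rewrite imE.
  have -> : cimag (cint (en1 c theta w0 w1 a phi u)) = 0.
    change (iint (fun x => cimag (en1 c theta w0 w1 a phi u x)) = 0).
    have -> : (fun x => cimag (en1 c theta w0 w1 a phi u x)) = (fun _ => 0).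
      by apply: funext => x; rewrite imE1.
    exact: (iint0 R n).1.
  by rewrite (iint0 R n).1 oppr0.
move=> t.
apply: cext.
- rewrite ReD; exact: (@ftc_const R _ _ H1 cFr t).
- rewrite ImD; exact: (@ftc_const R _ _ H2 cFi t).
Qed.
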